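(* For any incidence function $\varepsilon$ on the toric cell complex $\Delta$, the complex \[ 0\to P_n\xrightarrow{d_n}P_{n-1}\xrightarrow{d_{n-1}}\cdots\xrightarrow{d_2}P_1\xrightarrow{d_1}P_0\xrightarrow{\mu}A\to0 \] is a minimal projective $(A,A)$-bimodule resolution of $A$.
   Context: Let $\mathbb{k}$ be an algebraically closed field and $G\subset\operatorname{SL}(n,\mathbb{k})$ a finite abelian subgroup of diagonal matrices, with $\operatorname{char}\mathbb{k}$ not dividing $|G|$. Let $\rho_i\in G^*=\operatorname{Hom}(G,\mathbb{k}^\times)$ be the $i$-th diagonal entry. The McKay quiver $Q$ has vertex set $G^*$ and, for each $\rho\in G^*$ and $1\le i\le n$, an arrow $a_i^\rho:\rho\to\rho\rho_i$ (label $x_i$). Paths compose right to left. Let $A=\mathbb{k}Q/J$, where $J$ is generated by $a_i^{\rho\rho_j}a_j^\rho-a_j^{\rho\rho_i}a_i^\rho$ for $\rho\in G^*$, $1\le i<j\le n$ (this is isomorphic to the skew group algebra $\mathbb{k}[x_1,\dots,x_n]*G$). Toric cell complex: let $\deg:\mathbb{Z}^n\to G^*$, $\chi_i\mapsto\rho_i$, $M=\ker\deg$, $\mathbb{T}^n=\mathbb{R}^n/M$. The covering quiver has vertex set $\mathbb{Z}^n$ and arrows $u\to u+\chi_i$, mapping to $a_i^{\deg u}$. For $u\in\mathbb{Z}^n$, $S\subseteq\{1,\dots,n\}$ let $F(u,S)=\{u+\sum_{i\in S}\lambda_i\chi_i:0\le\lambda_i\le1\}$ (the faces of unit cubes $u+[0,1]^n$).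 $\Delta$ is the set of images in $\mathbb{T}^n$ of all $F(u,S)$ together with $\emptyset$; it is a finite regular cell complex, $\Delta_k$ being the images with $|S|=k$. For $\eta$ the image of $F(u,S)$: tail $\mathsf{t}(\eta)=\deg u$, head $\mathsf{h}(\eta)=\deg(u+\sum_{i\in S}\chi_i)$ (vertices of $Q$; $\Delta_0$ is identified with $G^*$). For a face $\eta'\subseteq\eta$ take lifts $F(u',S')\subseteq F(u,S)$; the left-derivative $\overleftarrow{\partial}_{\eta'}\eta\in A$ is the class of the image in $Q$ of any path in the covering quiver from $u'+\sum_{S'}\chi_i$ to $u+\sum_S\chi_i$, and the right-derivative $\overrightarrow{\partial}_{\eta'}\eta\in A$ that of any path from $u$ to $u'$ (these are well defined). Facets are faces of codimension one. An incidence function is $\varepsilon:\Delta\times\Delta\to\{0,\pm1\}$ with $\varepsilon(\eta,\eta')=0$ unless $\eta'$ is a facet of $\eta$, $\varepsilon(\eta,\emptyset)=1$ for 0-cells $\eta$, and for $\eta\in\Delta_k$ and a face $\eta''\in\Delta_{k-2}$ of $\eta$, with $\eta'_1,\eta'_2$ the two $(k-1)$-cells that are facets of $\eta$ containing $\eta''$, $\varepsilon(\eta,\eta_1')\varepsilon(\eta_1',\eta'')+\varepsilon(\eta,\eta_2')\varepsilon(\eta_2',\eta'')=0$. The complex: $P_k=\bigoplus_{\eta\in\Delta_k}Ae_{\mathsf{h}(\eta)}\otimes[\eta]\otimes e_{\mathsf{t}(\eta)}A$ (tensor over $\mathbb{k}$, $[\eta]$ a formal symbol; so $P_0=\bigoplus_{i}Ae_i\otimes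 e_iA$), $\mu:P_0\to A$ the multiplication, and $d_k(1\otimes[\eta]\otimes1)=\sum_{\eta'\text{ facet of }\eta}\varepsilon(\eta,\eta')\,\overleftarrow{\partial}_{\eta'}\eta\otimes[\eta']\otimes\overrightarrow{\partial}_{\eta'}\eta$.
   Formalization: Each $\rho_i$ is nontrivial; ε(η,η') ≠ 0 exactly when η' is a facet of η; the codimension-two condition holds for every lift of η'' in F(u,S), with the two facets of F(u,S) containing it; the $P_k$ are not asserted projective. Apart from conventions, each condition added here is assumed in the paper as well or is needed for the statement above to hold. *)

(* Defs.v *)
From HB Require Import structures.
From mathcomp Require Import all_boot all_order all_algebra all_fingroup.

Set Implicit Arguments.
Unset Strict Implicit.
Unset Printing Implicit Defensive.

Import GRing.Theory.
Local Open Scope ring_scope.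

(*  - G is a finite group gT together with n "diagonal entry" maps            *)
(*    coord i : gT -> k; the hypothesis [diag_SL_group coord] says that       *)
(*    x |-> diag(coord 0 x, ..., coord (n-1) x) is a faithful representation  *)
(*    of gT by diagonal matrices of determinant 1, i.e. gT is (isomorphic to) *)
(*    a finite (hence abelian) subgroup of diagonal matrices of SL(n,k).      *)
(*  - G^* = Hom(G, k^x) is the set of functions f : {ffun gT -> k} with       *)
(*    [is_character f]; rho i is the i-th diagonal entry as a character.      *)
(*  - A = kQ/J: the class of a path of Q modulo the commutativity relations   *)
(*    J is determined by its tail vertex and the multiset of its arrow labels *)
(*    x_i (an exponent vector m); it is encoded as the pair (tail, m), with   *)
(*    head = tail * rho^m.  These classes form a k-basis of A; the product    *)
(*    of classes (paths compose right to left) is [pmul].                     *)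
(*  - Vector spaces with a given basis B are modelled by formal finite linear *)
(*    combinations [vec B := seq (k * B)], compared through their             *)
(*    coefficient functions [coef].  Linear maps are extensions [lin] of maps *)
(*    on basis elements.                                                      *)
(*  - Cells of Delta: None = the empty cell, Some (rho, S) = image of         *)
(*    F(u,S) with deg u = rho (Delta_0 is identified with G^* ).                *)

Section Toric.
Variables (k : fieldType) (gT : finGroupType) (n : nat)
          (coord : 'I_n -> gT -> k).

Definition diag_SL_group : Prop :=
  [/\ forall i x y, coord i (x * y)%g = coord i x * coord i y,
      forall i x, coord i x != 0,
      forall x, (forall i, coord i x = 1) -> x = 1%g
    & forall x, \prod_(i < n) coord i x = 1].

Definition chr := {ffun gT -> k}.

Definition is_character (f : chr) : bool :=
  [forall x, forall y, f (x * y)%g == f x * f y] && [forall x, f x != 0].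

Definition ch1 : chr := [ffun => 1].
Definition chmul (f g : chr) : chr := [ffun x => f x * g x].
Definition rho (i : 'I_n) : chr := [ffun x => coord i x].

Definition expo := {ffun 'I_n -> nat}.
Definition chpow (m : expo) : chr := [ffun x => \prod_(i < n) coord i x ^+ m i].
Definition ind (S : {set 'I_n}) : expo := [ffun i => nat_of_bool (i \in S)].
Definition eadd (m m' : expo) : expo := [ffun i => (m i + m' i)%N].

Definition path := (chr * expo)%type.
Definition ptail (p : path) : chr := p.1.
Definition phead (p : path) : chr := chmul p.1 (chpow p.2).
Definition plen (p : path) : nat := (\sum_(i < n) p.2 i)%N.
Definition path_ok (p : path) : bool := is_character p.1.

Definition vec (B : Type) := seq (k * B).
Definition coef (B : eqType) (v : vec B) (b : B) : k :=
  \sum_(c <- v | c.2 == b) c.1.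
Definition lin (B C : Type) (f : B -> vec C) (v : vec B) : vec C :=
  flatten [seq [seq (c.1 * x.1, x.2) | x <- f c.2] | c <- v].
Definition vscale (B : Type) (a : k) (v : vec B) : vec B :=
  [seq (a * x.1, x.2) | x <- v].
Definition vec_in (B : Type) (P : pred B) (v : vec B) : bool :=
  all (fun c => P c.2) v.
Definition vzero (B : eqType) (v : vec B) : Prop := forall b, coef v b = 0.
Definition veq (B : eqType) (v w : vec B) : Prop := forall b, coef v b = coef w b.

Definition pmul (p q : path) : vec path :=
  if ptail p == phead q then [:: (1, (ptail q, eadd p.2 q.2))] else [::].

Definition cell := option (chr * {set 'I_n}).
Definition in_Delta (c : cell) : bool :=
  if c is Some (r, _) then is_character r else true.
Definition ctail (c : cell) : chr := if c is Some (r, _) then r else ch1.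
Definition chead (c : cell) : chr :=
  if c is Some (r, X) then chmul r (chpow (ind X)) else ch1.

(* the face F(u + sum_{i in W} chi_i, T) of F(u, S) (T, W disjoint subsets
   of S), where deg u = r *)
Definition fcell (r : chr) (T W : {set 'I_n}) : cell :=
  Some (chmul r (chpow (ind W)), T).

Definition is_facet (eta eta' : cell) : Prop :=
  match eta with
  | None => False
  | Some (r, X) =>
      if X == set0 then eta' = None
      else exists2 i, i \in X &
             (eta' = fcell r (X :\ i) set0 \/ eta' = fcell r (X :\ i) [set i])
  end.

Definition incidence (eps : cell -> cell -> int) : Prop :=
  [/\ forall c c', in_Delta c -> in_Delta c' -> eps c c' \in [:: 0%Z; 1%Z; (-1)%Z],
      forall c c', in_Delta c -> in_Delta c' -> (eps c c' != 0%Z <-> is_facet c c'),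
      forall r, is_character r -> eps (Some (r, set0)) None = 1%Z,
      (* k = 1 : the codim-2 face is the empty cell *)
      forall r i, is_character r ->
        (eps (Some (r, [set i])) (fcell r set0 set0) * eps (fcell r set0 set0) None
       + eps (Some (r, [set i])) (fcell r set0 [set i])
           * eps (fcell r set0 [set i]) None)%R = 0%Z
    & (* k >= 2 : every (lifted) codim-2 face F(u + sum_W chi, S\{i,j}) *)
      forall r (X W : {set 'I_n}) i j, is_character r ->
        i \in X -> j \in X -> i != j -> W \subset [set i; j] ->
        let eta := Some (r, X) in
        let eta2 := fcell r (X :\ i :\ j) W in
        let F1 := fcell r (X :\ i) (W :&: [set i]) in
        let F2 := fcell r (X :\ j) (W :&: [set j]) in
        (eps eta F1 * eps F1 eta2 + eps eta F2 * eps F2 eta2)%R = 0%Z].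

(* derivatives with respect to the face fcell r T W of Some (r, X) *)
Definition lder (r : chr) (S T W : {set 'I_n}) : path :=
  (chead (fcell r T W), ind ((S :\: T) :\: W)).
Definition rder (r : chr) (W : {set 'I_n}) : path := (r, ind W).

(* basis of P_k : A e_h(eta) (x) [eta] (x) e_t(eta) A  ~  (eta, p, q) *)
Definition pb := (cell * path * path)%type.
Definition pb_ok (d : nat) (b : pb) : bool :=
  let: (c, p, q) := b in
  if c is Some (r, X) then
    [&& is_character r, #|X| == d, path_ok p, ptail p == chead c,
        path_ok q & phead q == ctail c]
  else false.

Definition tens (x : vec path) (c : cell) (y : vec path) : vec pb :=
  [seq (a.1 * b.1, (c, a.2, b.2)) | a <- x, b <- y].

Definition dbasis (eps : cell -> cell -> int) (b : pb) : vec pb :=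
  let: (c, p, q) := b in
  if c is Some (r, X) then
    flatten [seq flatten
      [seq vscale (eps c (fcell r (X :\ i) W))%:~R
             (tens (pmul p (lder r X (X :\ i) W)) (fcell r (X :\ i) W)
                   (pmul (rder r W) q))
      | W <- [:: set0; [set i]]] | i <- enum X]
  else [::].
Definition dmap (eps : cell -> cell -> int) : vec pb -> vec pb := lin (dbasis eps).

Definition mubasis (b : pb) : vec path := let: (_, p, q) := b in pmul p q.
Definition mu : vec pb -> vec path := lin mubasis.

(* 0 -> P_n -> ... -> P_1 -> P_0 -> A -> 0 is exact, and minimal:
   im d_k is contained in rad(A) P_(k-1) + P_(k-1) rad(A), where rad(A)
   is the arrow ideal (spanned by paths of positive length). *)
Definition minimal_resolution (eps : cell -> cell -> int) : Prop :=
  [/\ forall a, vec_in path_ok a ->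
        exists2 v, vec_in (pb_ok 0) v & veq (mu v) a,
      forall v, vec_in (pb_ok 0) v ->
        (vzero (mu v) <-> exists2 w, vec_in (pb_ok 1) w & veq (dmap eps w) v),
      forall d, (1 <= d < n)%N -> forall v, vec_in (pb_ok d) v ->
        (vzero (dmap eps v) <->
           exists2 w, vec_in (pb_ok d.+1) w & veq (dmap eps w) v),
      (0 < n)%N -> forall v, vec_in (pb_ok n) v -> vzero (dmap eps v) -> vzero v
    & forall d, (1 <= d <= n)%N -> forall v, vec_in (pb_ok d) v ->
        forall b : pb, coef (dmap eps v) b != 0 ->
          (0 < plen b.1.2 + plen b.2)%N].

End Toric.

(* Main.v *)
Require Import Defs.
From HB Require Import structures.
From mathcomp Require Import all_boot all_order all_algebra all_fingroup.
From mathcomp Require Import ring zify.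
Set Implicit Arguments. Unset Strict Implicit. Unset Printing Implicit Defensive.
Import GRing.Theory.
Local Open Scope ring_scope.

Section Vec.
Variable k : fieldType.

Lemma coefE (B : eqType) (v : vec k B) b :
  coef v b = \sum_(c <- v) c.1 * (c.2 == b)%:R.
Proof.
rewrite /coef big_mkcond; apply: eq_bigr => c _.
by case: eqP => _; rewrite ?mulr1 ?mulr0.
Qed.

Lemma coef_nil (B : eqType) b : coef ([::] : vec k B) b = 0.
Proof. by rewrite /coef big_nil. Qed.

Lemma coef_cat (B : eqType) (v w : vec k B) b : coef (v ++ w) b = coef v b + coef w b.
Proof. by rewrite /coef big_cat. Qed.

Lemma coef_cons (B : eqType) (c : k * B) (v : vec k B) b :
  coef (c :: v) b = c.1 * (c.2 == b)%:R + coef v b.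
Proof. by rewrite !coefE big_cons. Qed.

Lemma coef_vscale (B : eqType) a (v : vec k B) b : coef (vscale a v) b = a * coef v b.
Proof.
rewrite !coefE /vscale big_map mulr_sumr; apply: eq_bigr => c _ /=; by rewrite mulrA.
Qed.

Lemma lin_cons (B C : Type) (f : B -> vec k C) c v :
  lin f (c :: v) = vscale c.1 (f c.2) ++ lin f v.
Proof. by []. Qed.

Lemma lin_cat (B C : Type) (f : B -> vec k C) v w :
  lin f (v ++ w) = lin f v ++ lin f w.
Proof. by rewrite /lin map_cat flatten_cat. Qed.

Lemma coef_lin (B : Type) (C : eqType) (f : B -> vec k C) v b :
  coef (lin f v) b = \sum_(c <- v) c.1 * coef (f c.2) b.
Proof.
elim: v => [|c v IH]; first by rewrite /lin /= coef_nil big_nil.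
by rewrite lin_cons coef_cat coef_vscale IH big_cons.
Qed.

Lemma coef_notin (B : eqType) (v : vec k B) b : b \notin map snd v -> coef v b = 0.
Proof.
elim: v => [|c v IH]; first by rewrite coef_nil.
rewrite /= inE negb_or => /andP [H1 H2]; rewrite coef_cons IH //.
by rewrite eq_sym (negbTE H1) mulr0 addr0.
Qed.

Lemma coef_in (B : eqType) (v : vec k B) b : coef v b != 0 -> b \in map snd v.
Proof. by apply: contraR => /coef_notin ->. Qed.

Lemma sum_coef (B : eqType) (v : vec k B) (g : B -> k) (s : seq B) :
  uniq s -> {subset map snd v <= s} ->
  \sum_(c <- v) c.1 * g c.2 = \sum_(b <- s) coef v b * g b.
Proof.
move=> us sub.
under [RHS]eq_bigr do rewrite coefE mulr_suml.
rewrite exchange_big /=; apply: eq_big_seq => c cv.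
have cs : c.2 \in s by apply: sub; apply: map_f.
rewrite (bigD1_seq c.2) //= eqxx mulr1 big1 ?addr0 // => b bc.
by rewrite eq_sym (negbTE bc) mulr0 mul0r.
Qed.

Lemma lin_veq (B C : eqType) (f : B -> vec k C) v w :
  veq v w -> veq (lin f v) (lin f w).
Proof.
move=> H b; rewrite !coef_lin.
rewrite (@sum_coef _ v (fun x => coef (f x) b) (undup (map snd (v ++ w)))) ?undup_uniq //;
  last by move=> x xv; rewrite mem_undup map_cat mem_cat xv.
rewrite (@sum_coef _ w (fun x => coef (f x) b) (undup (map snd (v ++ w)))) ?undup_uniq //;
  last by move=> x xv; rewrite mem_undup map_cat mem_cat xv orbT.
by apply: eq_bigr => x _; rewrite H.
Qed.

Lemma coef_lin_lin (B C : Type) (E : eqType) (f : C -> vec k E) (g : B -> vec k C) v b :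
  coef (lin f (lin g v)) b = \sum_(c <- v) c.1 * coef (lin f (g c.2)) b.
Proof.
elim: v => [|c v IH]; first by rewrite /lin /= coef_nil big_nil.
rewrite lin_cons lin_cat coef_cat IH big_cons; congr (_ + _).
rewrite !coef_lin /vscale big_map mulr_sumr; apply: eq_bigr => x _ /=.
by rewrite mulrA.
Qed.

Lemma vzero_lin (B C : eqType) (f : B -> vec k C) v :
  (forall c, c \in v -> vzero (f c.2)) -> vzero (lin f v).
Proof.
move=> H b; rewrite coef_lin big1_seq // => c /andP [_ cv].
by rewrite H // mulr0.
Qed.

Lemma coef_split2 (B : eqType) (v : vec k B) x z b : x != z ->
  coef v b = coef v x * (x == b)%:R + coef v z * (z == b)%:R
             + coef [seq c <- v | (c.2 != x) && (c.2 != z)] b.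
Proof.
move=> xz; rewrite /coef big_filter_cond.
have [<-|bx] := eqVneq x b.
  rewrite eq_sym (negbTE xz) mulr1 mulr0 addr0 [X in _ + X]big1 ?addr0 // => c.
  by case/andP=> /andP [/negbTE -> _].
have [<-|bz] := eqVneq z b.
  rewrite mulr1 mulr0 add0r [X in _ + X]big1 ?addr0 // => c.
  by case/andP=> /andP [_ /negbTE ->].
rewrite !mulr0 !add0r [RHS]big_mkcond [LHS]big_mkcond /=.
apply: eq_bigr => c _; case: eqP => [E|_]; last by rewrite andbF.
by rewrite E eq_sym bx eq_sym bz.
Qed.

Lemma mem_lin (B C : eqType) (f : B -> vec k C) v b :
  b \in map snd (lin f v) -> exists2 c, c \in v & b \in map snd (f c.2).
Proof.
elim: v => [|c v IH] //=.
rewrite lin_cons map_cat mem_cat => /orP [H|H].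
  exists c; first by rewrite inE eqxx.
  by move: H; rewrite /vscale -map_comp.
by case: (IH H) => c' c'v H'; exists c' => //; rewrite inE c'v orbT.
Qed.

End Vec.
Section Toric.
Variables (k : fieldType) (gT : finGroupType) (n : nat) (coord : 'I_n -> gT -> k).

Local Notation chpow := (chpow coord).
Local Notation chr := (chr k gT).
Local Notation expo := (expo n).
Local Notation pb := (pb k gT n).

Lemma chmulA (f g h : chr) : chmul (chmul f g) h = chmul f (chmul g h).
Proof. by apply/ffunP => x; rewrite !ffunE mulrA. Qed.

Lemma chpowD (m m' : expo) : chpow (eadd m m') = chmul (chpow m) (chpow m').
Proof.
apply/ffunP => x; rewrite !ffunE -big_split /=; apply: eq_bigr => i _.
by rewrite ffunE exprD.
Qed.

Lemma chmulpow (t : chr) (b m : expo) : chmul (chmul t (chpow b)) (chpow m) = chmul t (chpow (eadd m b)).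
Proof.
rewrite chmulA chpowD; congr chmul; apply/ffunP => x; rewrite !ffunE; exact: mulrC.
Qed.

Lemma eaddC (m m' : expo) : eadd m m' = eadd m' m.
Proof. by apply/ffunP => i; rewrite !ffunE addnC. Qed.

Lemma eaddA (m m' m'' : expo) : eadd m (eadd m' m'') = eadd (eadd m m') m''.
Proof. by apply/ffunP => i; rewrite !ffunE addnA. Qed.

Lemma eadd0 (m : expo) : eadd m (ind set0) = m.
Proof. by apply/ffunP => i; rewrite !ffunE inE addn0. Qed.

Lemma ind_setU (A B : {set 'I_n}) : [disjoint A & B] -> ind (A :|: B) = eadd (ind A) (ind B).
Proof.
move=> dAB; apply/ffunP => i; rewrite !ffunE inE.
case iA: (i \in A); case iB: (i \in B) => //.
by rewrite (disjointFr dAB iA) in iB.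
Qed.

Definition mk (t : chr) (b : expo) (X : {set 'I_n}) (a : expo) : pb :=
  (Some (chmul t (chpow b), X), (chmul (chmul t (chpow b)) (chpow (ind X)), a), (t, b)).

Lemma mk_eq (t : chr) (b : expo) (X : {set 'I_n}) (a : expo) t' b' X' a' :
  (mk t b X a == mk t' b' X' a') = [&& t == t', b == b', X == X' & a == a'].
Proof.
apply/eqP/and4P => [E|[/eqP -> /eqP -> /eqP -> /eqP ->]] //.
case: E => _ EX _ Ea Et Eb; by rewrite Et Eb EX Ea !eqxx.
Qed.

Definition dcell (t : chr) (b : expo) (X : {set 'I_n}) (a : expo) (i : 'I_n) (W : {set 'I_n}) := mk t (eadd (ind W) b) (X :\ i) (eadd a (ind ([set i] :\: W))).
Definition dco (eps : cell k gT n -> cell k gT n -> int) (t : chr) (b : expo) (X : {set 'I_n}) (i : 'I_n) (W : {set 'I_n}) : k :=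
  (eps (Some (chmul t (chpow b), X)) (fcell coord (chmul t (chpow b)) (X :\ i) W))%:~R.

Lemma pmulE (p q : Defs.path k gT n) : p.1 = phead coord q ->
  pmul coord p q = [:: (1, (q.1, eadd p.2 q.2))].
Proof. by move=> E; rewrite /pmul /ptail E eqxx. Qed.

Lemma setDDi (X : {set 'I_n}) i : i \in X -> X :\: (X :\ i) = [set i].
Proof.
move=> iX; apply/setP => l; rewrite !inE.
by case: eqP => [->|_]; rewrite ?iX ?andbF ?andbT ?andNb.
Qed.

Lemma ind_split (X W : {set 'I_n}) i : i \in X -> W \subset [set i] ->
  eadd (ind W) (eadd (ind (X :\ i)) (ind ([set i] :\: W))) = ind X.
Proof.
move=> iX /subsetP sW; apply/ffunP => l; rewrite !ffunE !inE.
have [->|li] := eqVneq l i.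
  by rewrite iX; case: (i \in W).
case lW: (l \in W); first by have := sW l lW; rewrite inE (negbTE li).
by case: (l \in X).
Qed.

Lemma dbasis_term (eps : cell k gT n -> cell k gT n -> int) (t : chr) (b : expo) (X : {set 'I_n}) (a : expo) (i : 'I_n) (W : {set 'I_n}) : i \in X -> W \subset [set i] ->
  vscale (eps (Some (chmul t (chpow b), X)) (fcell coord (chmul t (chpow b)) (X :\ i) W))%:~R
    (tens (pmul coord (chmul (chmul t (chpow b)) (chpow (ind X)), a)
             (lder coord (chmul t (chpow b)) X (X :\ i) W))
          (fcell coord (chmul t (chpow b)) (X :\ i) W)
          (pmul coord (rder (chmul t (chpow b)) W) (t, b)))
  = [:: (dco eps t b X i W, dcell t b X a i W)].
Proof.
move=> iX sW.
rewrite [pmul _ (rder _ _) _]pmulE // [pmul _ _ (lder _ _ _ _ _)]pmulE /=; last first.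
  rewrite /phead /lder /= /chead /fcell /= setDDi //.
  by rewrite !chmulA -!chpowD ind_split.
rewrite !mulr1 /dcell /mk /fcell setDDi //.
by rewrite /dco /fcell [chmul (chmul t _) (chpow (ind W))]chmulpow.
Qed.

Lemma dbasis_mk (eps : cell k gT n -> cell k gT n -> int) (t : chr) (b : expo) (X : {set 'I_n}) (a : expo) : dbasis coord eps (mk t b X a) =
  flatten [seq [seq (dco eps t b X i W, dcell t b X a i W) | W <- [:: set0; [set i]]] | i <- enum X].
Proof.
rewrite /dbasis /mk /=; congr flatten; apply/eq_in_map => i; rewrite mem_enum => iX /=.
rewrite !dbasis_term ?sub0set ?subxx //.
Qed.

End Toric.

Section Toric2.
Variables (k : fieldType) (gT : finGroupType) (n : nat) (coord : 'I_n -> gT -> k).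

Local Notation chpow := (chpow coord).
Local Notation chr := (chr k gT).
Local Notation expo := (expo n).
Local Notation pb := (pb k gT n).
Local Notation mk := (mk coord).
Local Notation dcell := (dcell coord).
Local Notation dco := (dco coord).
Local Notation cellT := (cell k gT n).

Lemma coef_flatten (B : eqType) (I : Type) (f : I -> vec k B) (r : seq I) y :
  coef (flatten [seq f i | i <- r]) y = \sum_(i <- r) coef (f i) y.
Proof.
elim: r => [|i r IH]; first by rewrite /= coef_nil big_nil.
by rewrite /= coef_cat IH big_cons.
Qed.

Lemma coef_dbasis (eps : cellT -> cellT -> int) t b (X : {set 'I_n}) a y :
  coef (dbasis coord eps (mk t b X a)) y =
  \sum_(i in X) (dco eps t b X i set0 * (dcell t b X a i set0 == y)%:R
               + dco eps t b X i [set i] * (dcell t b X a i [set i] == y)%:R).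
Proof.
rewrite dbasis_mk coef_flatten big_enum; apply: eq_bigr => i _.
by rewrite /= !coef_cons coef_nil addr0.
Qed.

Lemma coef_ddbasis (eps : cellT -> cellT -> int) t b (X : {set 'I_n}) a y :
  coef (lin (dbasis coord eps) (dbasis coord eps (mk t b X a))) y =
  \sum_(i in X) (dco eps t b X i set0 * coef (dbasis coord eps (dcell t b X a i set0)) y
               + dco eps t b X i [set i] * coef (dbasis coord eps (dcell t b X a i [set i])) y).
Proof.
rewrite dbasis_mk.
have H : forall (r : seq 'I_n) (g : 'I_n -> vec k pb),
  coef (lin (dbasis coord eps) (flatten [seq g i | i <- r])) y =
  \sum_(i <- r) coef (lin (dbasis coord eps) (g i)) y.
  move=> r g; elim: r => [|i r IH]; first by rewrite /= /lin /= coef_nil big_nil.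
  by rewrite /= lin_cat coef_cat IH big_cons.
rewrite H big_enum; apply: eq_bigr => i _.
by rewrite coef_lin !big_cons big_nil addr0.
Qed.

Hypothesis Hdiag : diag_SL_group coord.

Lemma char_mul (f g : chr) : is_character f -> is_character g -> is_character (chmul f g).
Proof.
case/andP => /forallP Hf1 /forallP Hf2 /andP [/forallP Hg1 /forallP Hg2].
apply/andP; split; apply/forallP => x.
  apply/forallP => y; rewrite !ffunE.
  move/forallP: (Hf1 x) => /(_ y) /eqP ->; move/forallP: (Hg1 x) => /(_ y) /eqP ->.
  by rewrite mulrACA.
by rewrite ffunE mulf_neq0.
Qed.

Lemma char_pow (m : expo) : is_character (chpow m).
Proof.
case: Hdiag => Hm Hnz _ _.
apply/andP; split; apply/forallP => x.
  apply/forallP => y; rewrite !ffunE -big_split /=; apply/eqP/eq_bigr => i _.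
  by rewrite Hm exprMn.
rewrite ffunE; apply/prodf_neq0 => i _; exact: expf_neq0.
Qed.

Lemma char_mk (t : chr) (b : expo) : is_character t -> is_character (chmul t (chpow b)).
Proof. by move=> Ht; apply: char_mul => //; exact: char_pow. Qed.

Lemma pb_ok_mk d t b (X : {set 'I_n}) a : is_character t -> #|X| = d ->
  pb_ok coord d (mk t b X a).
Proof.
move=> Ht HX; rewrite /pb_ok /mk /path_ok /ptail /phead /chead /ctail /=.
by rewrite HX !eqxx Ht !char_mk.
Qed.

Lemma pb_okE d (x : pb) : pb_ok coord d x ->
  exists t b X a, [/\ x = mk t b X a, is_character t & #|X| = d].
Proof.
case: x => [[[[r X]|] [p1 a]] [t b]] //=.
case/and5P => Hr /eqP HX _ /eqP Hp /andP [Ht /eqP Hq].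
exists t, b, X, a; split => //.
rewrite /phead /ctail /= in Hq; rewrite /ptail /chead /= in Hp.
by rewrite /mk Hp -Hq.
Qed.

Definition isU (b : expo) (X : {set 'I_n}) :=
  exists j, j \in X /\ forall l : 'I_n, (l < j)%N -> l \notin X /\ b l = 0%N.
Definition isD (b : expo) (X : {set 'I_n}) :=
  exists j b', [/\ j \notin X, b = eadd (ind [set j]) b' &
                 forall l : 'I_n, (l < j)%N -> l \notin X /\ b' l = 0%N].
Definition isC (b : expo) (X : {set 'I_n}) := X = set0 /\ forall l, b l = 0%N.

Lemma trich (b : expo) (X : {set 'I_n}) : isU b X \/ isD b X \/ isC b X.
Proof.
pose P := fun l : 'I_n => (l \in X) || (0 < b l)%N.
have [j0 Pj0|none] := pickP P; last first.
  right; right; split.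
    by apply/setP => l; rewrite inE; have := none l; rewrite /P; case: (l \in X).
  by move=> l; have := none l; rewrite /P; case: (b l) => // m; rewrite orbT.
case: (@arg_minnP _ j0 P (fun l => nat_of_ord l) Pj0) => j Pj Hmin.
have low : forall l : 'I_n, (l < j)%N -> l \notin X /\ b l = 0%N.
  move=> l lj; case Pl: (P l); first by have := Hmin l Pl; rewrite leqNgt lj.
  by move: Pl; rewrite /P; case: (l \in X) => //=; case: (b l).
case jX: (j \in X); first by left; exists j.
right; left; exists j, [ffun l => (b l - (l == j))%N]; split.
- by rewrite jX.
- apply/ffunP => l; rewrite !ffunE inE.
  case: eqP => [->|_]; last by rewrite subn0.
  by move: Pj; rewrite /P jX /= => bj; rewrite add1n subn1 prednK.
- move=> l lj; have [H1 H2] := low l lj; split => //.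
  by rewrite ffunE H2.
Qed.

Variable eps : cellT -> cellT -> int.
Hypothesis Hinc : incidence coord eps.

Lemma dco_neq0 t b (X : {set 'I_n}) i (W : {set 'I_n}) : is_character t -> i \in X ->
  W \subset [set i] -> dco eps t b X i W != 0.
Proof.
move=> Ht iX sW.
case: Hinc => H1 H2 _ _ _.
have D1 : in_Delta (Some (chmul t (chpow b), X)) by rewrite /= char_mk.
have D2 : in_Delta (fcell coord (chmul t (chpow b)) (X :\ i) W)
  by rewrite /= !char_mk.
have F : is_facet coord (Some (chmul t (chpow b), X)) (fcell coord (chmul t (chpow b)) (X :\ i) W).
  rewrite /=; case: eqP => [X0|_]; first by move: iX; rewrite X0 inE.
  exists i => //; move: sW; rewrite subset1 => /orP [/eqP ->|/eqP ->]; by [right|left].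
have [_ /(_ F) Hne] := H2 _ _ D1 D2.
have := H1 _ _ D1 D2; rewrite /dco !inE.
by case/or3P => /eqP E; rewrite E in Hne *; rewrite //= ?oppr_eq0 oner_eq0.
Qed.

End Toric2.

Definition esum (n : nat) (m : expo n) : nat := \sum_(l < n) m l.

Section Toric3.
Variables (k : fieldType) (gT : finGroupType) (n : nat) (coord : 'I_n -> gT -> k).

Local Notation chpow := (chpow coord).
Local Notation chr := (chr k gT).
Local Notation expo := (expo n).
Local Notation pb := (pb k gT n).
Local Notation mk := (mk coord).
Local Notation dcell := (dcell coord).
Local Notation dco := (dco coord).
Local Notation cellT := (cell k gT n).

Lemma esumD (m m' : expo) : esum (eadd m m') = (esum m + esum m')%N.
Proof. rewrite /esum -big_split /=; apply: eq_bigr => i _. by rewrite ffunE. Qed.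

Lemma esum_ind (A : {set 'I_n}) : esum (ind A) = #|A|.
Proof.
rewrite /esum -sum1_card [RHS]big_mkcond /=; apply: eq_bigr => i _.
by rewrite ffunE; case: (i \in A).
Qed.

Lemma sum_neq0 (F : 'I_n -> k) (X : {set 'I_n}) :
  \sum_(i in X) F i != 0 -> exists2 i, i \in X & F i != 0.
Proof.
move=> H; have [i /andP [iX Fi]|none] := pickP [pred i | (i \in X) && (F i != 0)].
  by exists i.
move: H; rewrite big1 ?eqxx // => i iX; apply/eqP.
by have := none i; rewrite /= iX /= => /negbFE.
Qed.

Lemma dcell_neq_i t b (Y : {set 'I_n}) a i j (W1 : {set 'I_n}) t' b' a' (W2 : {set 'I_n}) : i != j -> i \in Y ->
  (dcell t b Y a i W1 == dcell t' b' Y a' j W2) = false.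
Proof.
move=> ij iY; rewrite /dcell mk_eq; apply/negbTE; apply/negP => /and4P [_ _ /eqP E _].
have : i \in Y :\ j by rewrite !inE ij iY.
by rewrite -E !inE eqxx.
Qed.

Lemma dcell_neqW t b (Y : {set 'I_n}) a j :
  (dcell t b Y a j set0 == dcell t b Y a j [set j]) = false.
Proof.
rewrite /dcell mk_eq; apply/negbTE; apply/negP => /and4P [_ /eqP E _ _].
by have := congr1 (fun f : expo => f j) E; rewrite !ffunE !inE eqxx => /eqP; rewrite eqn_add2r.
Qed.

Lemma coef_dbasis_dcell (eps : cellT -> cellT -> int) t b (Y : {set 'I_n}) a j (W : {set 'I_n}) :
  j \in Y -> W \subset [set j] ->
  coef (dbasis coord eps (mk t b Y a)) (dcell t b Y a j W) = dco eps t b Y j W.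
Proof.
move=> jY sW; rewrite coef_dbasis (bigD1 j) //= big1 ?addr0; last first.
  by move=> i /andP [iY ij]; rewrite !dcell_neq_i // !mulr0 addr0.
move: sW; rewrite subset1 => /orP [/eqP ->|/eqP ->].
  by rewrite eqxx (dcell_neqW t b Y a j) mulr0 mulr1 add0r.
by rewrite eqxx eq_sym (dcell_neqW t b Y a j) mulr0 mulr1 addr0.
Qed.

Lemma inj_key t (b : expo) (X : {set 'I_n}) (a : expo) j t' (b' : expo) (X' : {set 'I_n}) a' i (W : {set 'I_n}) :
  j \in X -> (forall l : 'I_n, (l < j)%N -> l \notin X /\ b l = 0%N) ->
  isU b' X' -> i \in X' -> W \subset [set i] ->
  dcell t' b' X' a' i W = dcell t b X a j [set j] ->
  mk t' b' X' a' = mk t b X a \/ (esum b < esum b')%N.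
Proof.
move=> jX lowj [j' [j'X' low']] iX' sW E.
move/eqP: E; rewrite /dcell mk_eq => /and4P [/eqP Et /eqP Eb /eqP EX /eqP Ea].
move: sW; rewrite subset1 => /orP [/eqP WE | /eqP W0]; last first.
  right; move: (congr1 (@esum n) Eb); rewrite W0 !esumD !esum_ind cards0 cards1 add0n => ->.
  by rewrite add1n ltnSn.
subst W; left.
have Epw : forall l, ((l == i) + b' l = (l == j) + b l)%N.
  by move=> l; have := congr1 (fun f : expo => f l) Eb; rewrite !ffunE !inE.
have ij : i = j.
  apply/eqP; apply/negPn/negP => nij.
  have bi : (0 < b i)%N by have := Epw i; rewrite eqxx (negbTE nij) add0n => <-.
  have bj : (0 < b' j)%N by have := Epw j; rewrite eqxx eq_sym (negbTE nij) add0n => ->.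
  have jX' : j \notin X'.
    apply/negP => jX'; have : j \in X' :\ i by rewrite !inE eq_sym nij jX'.
    by rewrite EX !inE eqxx.
  have ji : (j < i)%N.
    case: (ltngtP i j) => [lij|//|eij]; last by move: nij; rewrite (val_inj eij) eqxx.
    by have [_ H] := lowj i lij; rewrite H in bi.
  case: (ltngtP j' j) => [j'j|jj'|ej'j].
  - have [j'i|j'i] := eqVneq j' i; first by move: j'j; rewrite j'i ltnNge ltnW.
    have : j' \in X' :\ i by rewrite !inE j'i j'X'.
    rewrite EX !inE => /andP [_ j'X]; have [H _] := lowj j' j'j; by rewrite j'X in H.
  - by have [_ H] := low' j jj'; rewrite H in bj.
  - by move: jX'; rewrite -(val_inj ej'j) j'X'.
subst i.
have Eb' : b' = b.
  by apply/ffunP => l; apply/eqP; rewrite -(eqn_add2l (l == j)) Epw.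
have EX' : X' = X by rewrite -(setD1K iX') EX setD1K.
have Ea' : a' = a by move: Ea; rewrite setDv !eadd0.
by rewrite Et Eb' EX' Ea'.
Qed.

End Toric3.

Section Toric4.
Variables (k : fieldType) (gT : finGroupType) (n : nat) (coord : 'I_n -> gT -> k).
Hypothesis Hdiag : diag_SL_group coord.
Variable eps : cell k gT n -> cell k gT n -> int.
Hypothesis Hinc : incidence coord eps.

Local Notation chpow := (chpow coord).
Local Notation chr := (chr k gT).
Local Notation expo := (expo n).
Local Notation pb := (pb k gT n).
Local Notation mk := (mk coord).
Local Notation dcell := (dcell coord).
Local Notation dco := (dco coord eps).
Local Notation dbasis := (dbasis coord eps).
Local Notation dmap := (dmap coord eps).

Definition Uok d (x : pb) := exists t b X a,
  [/\ x = mk t b X a, is_character t, #|X| = d & isU b X].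

Lemma inj_U d (w : vec k pb) : (forall c, c \in w -> Uok d c.2) ->
  vzero (dmap w) -> vzero w.
Proof.
move=> Hw Hz.
pose M := (\max_(c <- w) esum c.2.2.2)%N.
suff H : forall N (y : pb), (M < esum y.2.2 + N)%N -> coef w y = 0.
  by move=> y; apply: (H M.+1); rewrite addnS ltnS leq_addl.
elim=> [|N IH] y HM.
  apply: coef_notin; apply/negP => /mapP [c cw yE].
  have := @leq_bigmax_seq _ w xpredT (fun c : k * pb => esum c.2.2.2) c cw isT.
  by rewrite -/M -yE leqNgt; rewrite addn0 in HM; rewrite HM.
case yw: (y \in map snd w); last by apply: coef_notin; rewrite yw.
have [c cw yE] := mapP yw.
have [t [b [X [a [Ey Ht HX [j [jX lowj]]]]]]] := Hw c cw.
rewrite -yE in Ey.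
pose del := dcell t b X a j [set j].
have := Hz del.
rewrite /dmap coef_lin (@sum_coef _ _ w (fun x => coef (dbasis x) del) (undup (map snd w)));
  last by move=> x; rewrite mem_undup.
  2: exact: undup_uniq.
rewrite (bigD1_seq y) ?mem_undup ?undup_uniq //= big1_seq ?addr0.
  rewrite Ey coef_dbasis_dcell ?sub1set ?inE // => /eqP.
  rewrite mulf_eq0 (negbTE (dco_neq0 Hdiag Hinc b Ht jX _)) ?subxx // orbF -Ey.
  by move/eqP.
move=> s /andP [sy]; rewrite mem_undup => sw.
have [c' c'w sE] := mapP sw.
have [t' [b' [X' [a' [Es Ht' HX' HU']]]]] := Hw c' c'w.
rewrite -sE in Es.
have [->|nz] := eqVneq (coef (dbasis s) del) 0; first by rewrite mulr0.
suff -> : coef w s = 0 by rewrite mul0r.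
move: nz; rewrite Es coef_dbasis => /sum_neq0 [i iX' nz].
have [W sW EW] : exists2 W : {set 'I_n}, W \subset [set i] & dcell t' b' X' a' i W = del.
  move: nz; case E0: (dcell t' b' X' a' i set0 == del).
    by move=> _; exists set0; [rewrite sub0set | apply/eqP].
  case E1: (dcell t' b' X' a' i [set i] == del).
    by move=> _; exists [set i]; [rewrite subxx | apply/eqP].
  by rewrite !mulr0 addr0 eqxx.
have [Eq|lt] := inj_key jX lowj HU' iX' sW EW.
  by move: sy; rewrite Es Ey Eq eqxx.
apply: IH; rewrite /=; apply: (leq_trans HM).
by rewrite Ey /= addnS ltn_add2r.
Qed.

End Toric4.

Lemma coef_lin_vscale (k : fieldType) (B : Type) (C : eqType) (f : B -> vec k C) a v b :
  coef (lin f (vscale a v)) b = a * coef (lin f v) b.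
Proof.
rewrite !coef_lin /vscale big_map mulr_sumr; apply: eq_bigr => c _ /=; by rewrite mulrA.
Qed.

Lemma coef_single (k : fieldType) (B : eqType) (x : B) b : coef [:: ((1 : k), x)] b = (x == b)%:R.
Proof. by rewrite coef_cons coef_nil addr0 mul1r. Qed.

Lemma mem_vscale (k : fieldType) (B : eqType) (a : k) (v : vec k B) c :
  c \in vscale a v -> c.2 \in map snd v.
Proof. by case/mapP => c0 c0v ->; rewrite /= map_f. Qed.

Lemma vec_in_vscale (k : fieldType) (B : eqType) (P : pred B) (a : k) v :
  vec_in P (vscale a v) = vec_in P v.
Proof. by rewrite /vec_in /vscale all_map. Qed.

Lemma vec_in_cat (k : fieldType) (B : eqType) (P : pred B) (v w : vec k B) :
  vec_in P (v ++ w) = vec_in P v && vec_in P w.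
Proof. by rewrite /vec_in all_cat. Qed.

Section Toric5.
Variables (k : fieldType) (gT : finGroupType) (n : nat) (coord : 'I_n -> gT -> k).
Hypothesis Hdiag : diag_SL_group coord.
Variable eps : cell k gT n -> cell k gT n -> int.
Hypothesis Hinc : incidence coord eps.

Local Notation chpow := (chpow coord).
Local Notation chr := (chr k gT).
Local Notation expo := (expo n).
Local Notation pb := (pb k gT n).
Local Notation mk := (mk coord).
Local Notation dcell := (dcell coord).
Local Notation dco := (dco coord eps).
Local Notation dbasis := (dbasis coord eps).
Local Notation dmap := (dmap coord eps).

Definition UCok d (x : pb) := exists t b X a,
  [/\ x = mk t b X a, is_character t, #|X| = d & isU b X \/ isC b X].

Lemma mem_dbasis t b (Y : {set 'I_n}) a c : c \in dbasis (mk t b Y a) ->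
  exists i (W : {set 'I_n}), [/\ i \in Y, W \subset [set i] & c.2 = dcell t b Y a i W].
Proof.
rewrite dbasis_mk => /flattenP [s /mapP [i iY ->]].
rewrite mem_enum in iY.
rewrite /= !inE => /orP [/eqP ->|/eqP ->]; exists i.
  by exists set0; rewrite sub0set.
by exists [set i]; rewrite subxx.
Qed.

Lemma dcell_U (b' : expo) (X : {set 'I_n}) j i (W : {set 'I_n}) :
  j \notin X -> (forall l : 'I_n, (l < j)%N -> l \notin X /\ b' l = 0%N) ->
  i \in X -> W \subset [set i] -> isU (eadd (ind W) b') ((j |: X) :\ i).
Proof.
move=> jX low iX sW; exists j; split.
  rewrite !inE eqxx andbT; apply/eqP => ji; by rewrite ji iX in jX.
move=> l lj; have [H1 H2] := low l lj; split.
  have lnj : l != j by apply/eqP => E; rewrite E ltnn in lj.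
  by rewrite !inE negb_and negb_or H1 andbT lnj orbT.
rewrite !ffunE H2 addn0; case lW: (l \in W) => //.
move/subsetP: sW => /(_ l lW); rewrite inE => /eqP li.
by rewrite li iX in H1.
Qed.

Lemma red1 d N (x : pb) : (esum x.2.2 < N)%N -> pb_ok coord d x ->
  exists (w v' : vec k pb), [/\ vec_in (pb_ok coord d.+1) w, (forall c, c \in v' -> UCok d c.2)
               & veq [:: (1, x)] (dmap w ++ v')].
Proof.
elim: N x => [|N IH] x Hx Hok; first by rewrite ltn0 in Hx.
have [t [b [X [a [Ex Ht HX]]]]] := pb_okE Hok.
have [HU|[[j [b' [jX Eb low]]]|HC]] := trich b X; last 1 first.
- exists [::], [:: (1, x)]; split => //.
    by move=> c; rewrite inE => /eqP -> /=; exists t, b, X, a; split => //; right.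
- exists [::], [:: (1, x)]; split => //.
    by move=> c; rewrite inE => /eqP -> /=; exists t, b, X, a; split => //; left.
pose y := mk t b' (j |: X) a.
have Ex' : x = dcell t b' (j |: X) a j [set j].
  by rewrite Ex Eb /dcell setU1K // setDv eadd0.
pose z := dcell t b' (j |: X) a j set0.
have xz : x != z by rewrite Ex' /z eq_sym (dcell_neqW coord t b' (j |: X) a j).
have jjX : j \in j |: X by rewrite !inE eqxx.
have Hzok : pb_ok coord d z by rewrite /z /dcell; apply: pb_ok_mk => //; rewrite setU1K.
have Hzs : (esum z.2.2 < N)%N.
  move: Hx; rewrite Ex Eb /= !esumD !esum_ind cards0 cards1 add0n add1n ltnS.
  by [].
have [wz [vz [Hwz Hvz Ez]]] := IH z Hzs Hzok.
pose e := dco t b' (j |: X) j [set j].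
pose ez := dco t b' (j |: X) j set0.
have ne : e != 0 by apply: dco_neq0 => //; rewrite subxx.
pose R := [seq c <- dbasis y | (c.2 != x) && (c.2 != z)].
exists (vscale e^-1 [:: (1, y)] ++ vscale (- (ez / e)) wz),
       (vscale (- (ez / e)) vz ++ vscale (- e^-1) R); split.
- rewrite vec_in_cat !vec_in_vscale Hwz andbT /vec_in /= andbT.
  by apply: pb_ok_mk => //; rewrite cardsU1 jX HX.
- move=> c; rewrite mem_cat => /orP [/mem_vscale /mapP [c0 c0v ->]|/mem_vscale /mapP [c0 c0R ->]].
    exact: Hvz.
  move: c0R; rewrite mem_filter => /andP [/andP [c0x c0z] c0y].
  have [i [W [iY sW Ec0]]] := mem_dbasis c0y.
  have ij : i != j.
    apply/eqP => ij; subst i; move: sW; rewrite subset1 => /orP [/eqP WE|/eqP W0].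
      by move: c0x; rewrite Ec0 WE -Ex' eqxx.
    by move: c0z; rewrite Ec0 W0 eqxx.
  have iX : i \in X by move: iY; rewrite !inE (negbTE ij).
  rewrite Ec0; exists t, (eadd (ind W) b'), ((j |: X) :\ i),
    (eadd a (ind ([set i] :\: W))); split => //.
    by have := cardsD1 i (j |: X); rewrite iY cardsU1 jX HX /= => /eqP; rewrite eqn_add2l => /eqP.
  by left; apply: dcell_U.
- move=> bb; rewrite /dmap lin_cat.
  set A := lin _ (vscale e^-1 _); set B := lin _ (vscale _ wz).
  set C := vscale _ vz; set D := vscale _ R.
  rewrite coef_single !coef_cat /A /B /C /D !coef_lin_vscale !coef_vscale.
  rewrite /= coef_nil addr0 mulr1.
  rewrite (coef_split2 _ bb xz) -/R.
  have -> : coef (dbasis y) x = e by rewrite Ex' coef_dbasis_dcell // subxx.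
  have -> : coef (dbasis y) z = ez by rewrite /z coef_dbasis_dcell // sub0set.
  have := Ez bb; rewrite coef_single coef_cat => Hz.
  rewrite Hz; field; exact: ne.
Qed.

End Toric5.

Lemma sum_pairs_swap (k : fieldType) (n : nat) (F : 'I_n -> 'I_n -> k) (X : {set 'I_n}) :
  (forall i j, i \in X -> j \in X -> i != j -> F i j + F j i = 0) ->
  \sum_(i in X) \sum_(j in X :\ i) F i j = 0.
Proof.
move=> H; rewrite pair_big_dep /=.
rewrite (bigID (fun p : 'I_n * 'I_n => (p.1 < p.2)%N)) /=.
pose h := fun p : 'I_n * 'I_n => (p.2, p.1).
have hinj : injective h by move=> [a b] [c d] [-> ->].
rewrite [X in _ + X](reindex_inj hinj) /=.
rewrite [X in _ + X](eq_bigl (fun p : 'I_n * 'I_n => (p.1 \in X) && (p.2 \in X :\ p.1) && (p.1 < p.2)%N)); last first.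
  move=> [a b] /=; rewrite !inE.
  case: (ltngtP a b) => [ab|ba|eab] /=.
  - have ba : b != a by apply/eqP => E; rewrite E ltnn in ab.
    have ab' : a != b by rewrite eq_sym.
    by rewrite ba ab' !andbT; case: (a \in X); case: (b \in X).
  - by rewrite !andbF.
  - by rewrite (val_inj eab) eqxx /= !andbF.
rewrite -big_split /= big1 // => [[a b]] /=; rewrite !inE => /andP [/andP [aX /andP [ba bX]] _].
by apply: H => //; rewrite eq_sym.
Qed.

Section Toric6.
Variables (k : fieldType) (gT : finGroupType) (n : nat) (coord : 'I_n -> gT -> k).
Hypothesis Hdiag : diag_SL_group coord.
Variable eps : cell k gT n -> cell k gT n -> int.
Hypothesis Hinc : incidence coord eps.

Local Notation chpow := (chpow coord).
Local Notation chr := (chr k gT).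
Local Notation expo := (expo n).
Local Notation pb := (pb k gT n).
Local Notation mk := (mk coord).
Local Notation dcell := (dcell coord).
Local Notation dco := (dco coord eps).
Local Notation dbasis := (dbasis coord eps).
Local Notation dmap := (dmap coord eps).

Lemma eind2 (A B : {set 'I_n}) (b : expo) : [disjoint A & B] ->
  eadd (ind A) (eadd (ind B) b) = eadd (ind (A :|: B)) b.
Proof. by move=> dAB; rewrite eaddA ind_setU. Qed.

Lemma setD1C (X : {set 'I_n}) i j : (X :\ i) :\ j = (X :\ j) :\ i.
Proof. by apply/setP => l; rewrite !inE; case: (l == i); case: (l == j). Qed.

Lemma disj1 (Wi Wj : {set 'I_n}) i j : i != j -> Wi \subset [set i] -> Wj \subset [set j] ->
  [disjoint Wi & Wj].
Proof.
move=> ij sWi sWj; apply/pred0P => l /=.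
case lWi: (l \in Wi) => //=; apply/negP => lWj.
move/subsetP: sWi => /(_ l lWi); move/subsetP: sWj => /(_ l lWj).
by rewrite !inE => /eqP -> /eqP E; rewrite E eqxx in ij.
Qed.

Lemma capW (Wi Wj : {set 'I_n}) i j : i != j -> Wi \subset [set i] -> Wj \subset [set j] ->
  (Wi :|: Wj) :&: [set i] = Wi.
Proof.
move=> ij /subsetP sWi /subsetP sWj; apply/setP => l; rewrite !inE.
have [->|li] := eqVneq l i.
  rewrite andbT; case iWj: (i \in Wj); last by rewrite orbF.
  by have := sWj i iWj; rewrite inE (negbTE ij).
rewrite andbF; case lWi: (l \in Wi) => //.
by have := sWi l lWi; rewrite inE (negbTE li).
Qed.

Lemma pair_zero t b (X : {set 'I_n}) a y i j (Wi Wj : {set 'I_n}) :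
  is_character t -> i \in X -> j \in X -> i != j ->
  Wi \subset [set i] -> Wj \subset [set j] ->
  dco t b X i Wi * (dco t (eadd (ind Wi) b) (X :\ i) j Wj *
     (dcell t (eadd (ind Wi) b) (X :\ i) (eadd a (ind ([set i] :\: Wi))) j Wj == y)%:R)
  + dco t b X j Wj * (dco t (eadd (ind Wj) b) (X :\ j) i Wi *
     (dcell t (eadd (ind Wj) b) (X :\ j) (eadd a (ind ([set j] :\: Wj))) i Wi == y)%:R) = 0.
Proof.
move=> Ht iX jX ij sWi sWj.
have dij := disj1 ij sWi sWj.
have dji : [disjoint Wj & Wi] by rewrite disjoint_sym.
have Ec : dcell t (eadd (ind Wj) b) (X :\ j) (eadd a (ind ([set j] :\: Wj))) i Wi =
          dcell t (eadd (ind Wi) b) (X :\ i) (eadd a (ind ([set i] :\: Wi))) j Wj.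
  rewrite /dcell (eind2 _ dij) (eind2 _ dji) setUC setD1C; congr mk.
  by rewrite -!eaddA [eadd (ind _) (ind _)]eaddC.
rewrite Ec !mulrA -mulrDl.
suff -> : dco t b X i Wi * dco t (eadd (ind Wi) b) (X :\ i) j Wj +
          dco t b X j Wj * dco t (eadd (ind Wj) b) (X :\ j) i Wi = 0 by rewrite mul0r.
rewrite /dco -!intrM -intrD.
case: Hinc => _ _ _ _ H5.
have ji : j != i by rewrite eq_sym.
have HW : Wi :|: Wj \subset [set i; j].
  rewrite subUset; apply/andP; split.
    by apply: (subset_trans sWi); rewrite sub1set !inE eqxx.
  by apply: (subset_trans sWj); rewrite sub1set !inE eqxx orbT.
have := H5 (chmul t (chpow b)) X (Wi :|: Wj) i j (char_mk Hdiag b Ht) iX jX ij HW.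
rewrite /= (capW ij sWi sWj) setUC (capW (ji) sWj sWi) setUC.
rewrite /fcell !chmulpow (eind2 _ dji) (eind2 _ dij) (setUC Wj Wi) (setD1C X j i) => ->.
by [].
Qed.

Definition Tf t b (X : {set 'I_n}) a y i (Wi : {set 'I_n}) j (Wj : {set 'I_n}) :=
  dco t b X i Wi * (dco t (eadd (ind Wi) b) (X :\ i) j Wj *
     (dcell t (eadd (ind Wi) b) (X :\ i) (eadd a (ind ([set i] :\: Wi))) j Wj == y)%:R).

Lemma coef_dbasis_dc t b (X : {set 'I_n}) a i (W : {set 'I_n}) y :
  coef (dbasis (dcell t b X a i W)) y =
  \sum_(j in X :\ i) (dco t (eadd (ind W) b) (X :\ i) j set0 *
      (dcell t (eadd (ind W) b) (X :\ i) (eadd a (ind ([set i] :\: W))) j set0 == y)%:R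
    + dco t (eadd (ind W) b) (X :\ i) j [set j] *
      (dcell t (eadd (ind W) b) (X :\ i) (eadd a (ind ([set i] :\: W))) j [set j] == y)%:R).
Proof. exact: coef_dbasis. Qed.

Lemma dd_mk t b (X : {set 'I_n}) a : is_character t ->
  vzero (lin dbasis (dbasis (mk t b X a))).
Proof.
move=> Ht y.
have -> : coef (lin dbasis (dbasis (mk t b X a))) y =
  \sum_(i in X) \sum_(j in X :\ i)
    (Tf t b X a y i set0 j set0 + Tf t b X a y i set0 j [set j]
     + Tf t b X a y i [set i] j set0 + Tf t b X a y i [set i] j [set j]).
  rewrite coef_ddbasis; apply: eq_bigr => i iX.
  rewrite !coef_dbasis_dc !mulr_sumr -big_split; apply: eq_bigr => j _.
  by rewrite /Tf !mulrDr /= !addrA.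
apply: sum_pairs_swap => i j iX jX ij.
have s0 : forall l : 'I_n, (set0 : {set 'I_n}) \subset [set l] by move=> l; rewrite sub0set.
have s1 : forall l : 'I_n, [set l] \subset [set l] by move=> l; rewrite subxx.
have P1 : Tf t b X a y i set0 j set0 + Tf t b X a y j set0 i set0 = 0
  := @pair_zero t b X a y i j _ _ Ht iX jX ij (s0 i) (s0 j).
have P2 : Tf t b X a y i set0 j [set j] + Tf t b X a y j [set j] i set0 = 0
  := @pair_zero t b X a y i j _ _ Ht iX jX ij (s0 i) (s1 j).
have P3 : Tf t b X a y i [set i] j set0 + Tf t b X a y j set0 i [set i] = 0
  := @pair_zero t b X a y i j _ _ Ht iX jX ij (s1 i) (s0 j).
have P4 : Tf t b X a y i [set i] j [set j] + Tf t b X a y j [set j] i [set i] = 0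
  := @pair_zero t b X a y i j _ _ Ht iX jX ij (s1 i) (s1 j).
move/eqP: P1; rewrite addr_eq0 => /eqP ->.
move/eqP: P2; rewrite addr_eq0 => /eqP ->.
move/eqP: P3; rewrite addr_eq0 => /eqP ->.
move/eqP: P4; rewrite addr_eq0 => /eqP ->.
ring.
Qed.

End Toric6.

Section Toric7.
Variables (k : fieldType) (gT : finGroupType) (n : nat) (coord : 'I_n -> gT -> k).
Hypothesis Hdiag : diag_SL_group coord.
Variable eps : cell k gT n -> cell k gT n -> int.
Hypothesis Hinc : incidence coord eps.

Local Notation chpow := (chpow coord).
Local Notation chr := (chr k gT).
Local Notation expo := (expo n).
Local Notation pb := (pb k gT n).
Local Notation mk := (mk coord).
Local Notation dcell := (dcell coord).
Local Notation dco := (dco coord eps).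
Local Notation dbasis := (dbasis coord eps).
Local Notation dmap := (dmap coord eps).

Lemma chpow_ind0 (r : chr) : chmul r (chpow (ind set0)) = r.
Proof.
apply/ffunP => x; rewrite !ffunE big1 ?mulr1 // => i _.
by rewrite ffunE inE expr0.
Qed.

Lemma mubasis_mk0 t b a : mubasis coord (mk t b set0 a) = [:: (1, (t, eadd a b))].
Proof. by rewrite /mubasis /mk pmulE //= chpow_ind0. Qed.

Lemma mu_d_mk t b (X : {set 'I_n}) a : is_character t -> #|X| = 1%N ->
  vzero (lin (mubasis coord) (dbasis (mk t b X a))).
Proof.
move=> Ht /eqP/cards1P [i ->] y.
rewrite dbasis_mk enum_set1 /= coef_lin !big_cons big_nil addr0.
rewrite /dcell setDv !mubasis_mk0 !coef_single.
have -> : eadd (eadd a (ind ([set i] :\: set0))) (eadd (ind set0) b) =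
          eadd (eadd a (ind set0)) (eadd (ind [set i]) b).
  by apply/ffunP => l; rewrite !ffunE !inE; case: (l == i) => /=; lia.
rewrite /= -mulrDl; apply/eqP; rewrite mulf_eq0; apply/orP; left.
rewrite /dco -intrD; apply/eqP.
case: Hinc => _ _ H3 H4 _.
have := H4 (chmul t (chpow b)) i (char_mk Hdiag b Ht).
rewrite !H3 /fcell ?mulr1 ?setDv => [->//||]; by do 2 apply: (char_mk Hdiag).
Qed.

End Toric7.

Section Toric8.
Variables (k : fieldType) (gT : finGroupType) (n : nat) (coord : 'I_n -> gT -> k).
Hypothesis Hdiag : diag_SL_group coord.
Variable eps : cell k gT n -> cell k gT n -> int.
Hypothesis Hinc : incidence coord eps.

Local Notation chpow := (chpow coord).
Local Notation chr := (chr k gT).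
Local Notation expo := (expo n).
Local Notation pb := (pb k gT n).
Local Notation mk := (mk coord).
Local Notation dcell := (dcell coord).
Local Notation dco := (dco coord eps).
Local Notation dbasis := (dbasis coord eps).
Local Notation dmap := (dmap coord eps).

Lemma red_vec d (v : vec k pb) : vec_in (pb_ok coord d) v ->
  exists (w v' : vec k pb), [/\ vec_in (pb_ok coord d.+1) w,
    (forall c, c \in v' -> UCok coord d c.2) & veq v (dmap w ++ v')].
Proof.
elim: v => [|c v IH] /=.
  by move=> _; exists [::], [::]; split.
move=> /andP [Hc Hv].
have [w1 [v1 [Hw1 Hv1 E1]]] := red1 Hdiag Hinc (ltnSn (esum c.2.2.2)) Hc.
have [w0 [v0 [Hw0 Hv0 E0]]] := IH Hv.
exists (vscale c.1 w1 ++ w0), (vscale c.1 v1 ++ v0); split.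
- by rewrite vec_in_cat vec_in_vscale Hw1 Hw0.
- move=> c'; rewrite mem_cat => /orP [/mem_vscale /mapP [c0 c0v ->]|H]; [exact: Hv1 | exact: Hv0].
- move=> bb; rewrite coef_cons E0.
  have := E1 bb; rewrite coef_single => ->.
  rewrite /dmap lin_cat.
  set A := lin _ (vscale _ w1); set B := lin _ w0.
  set C := vscale _ v1.
  rewrite !coef_cat /A /C coef_lin_vscale coef_vscale /dmap; ring.
Qed.

Lemma dd_zero d (w : vec k pb) : vec_in (pb_ok coord d) w -> vzero (dmap (dmap w)).
Proof.
move=> Hw y; rewrite /dmap coef_lin_lin big1_seq // => c /andP [_ cw].
have [t [b [X [a [Ec Ht _]]]]] := pb_okE (allP Hw c cw).
by rewrite Ec (dd_mk Hdiag Hinc) // mulr0.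
Qed.

Lemma mud_zero (w : vec k pb) : vec_in (pb_ok coord 1) w -> vzero (mu coord (dmap w)).
Proof.
move=> Hw y; rewrite /mu /dmap coef_lin_lin big1_seq // => c /andP [_ cw].
have [t [b [X [a [Ec Ht HX]]]]] := pb_okE (allP Hw c cw).
by rewrite Ec (mu_d_mk Hdiag Hinc) // mulr0.
Qed.

End Toric8.

Local Close Scope ring_scope.

Theorem theorem4p10 (k : closedFieldType) (gT : finGroupType) (n : nat)
    (coord : 'I_n -> gT -> k) :
  diag_SL_group coord ->
  (forall p, p \in [pchar k]%R -> ~~ (p %| #|gT|)) ->
  (forall i : 'I_n, rho coord i != ch1 k gT) ->
  forall eps : cell k gT n -> cell k gT n -> int,
    incidence coord eps -> minimal_resolution coord eps.
Proof.
move=> Hdiag _ _ eps Hinc.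
have ez : forall m : expo n, eadd m [ffun => 0%N] = m.
  by move=> m; apply/ffunP => i; rewrite !ffunE addn0.
split.
-
  move=> a Ha; exists [seq (c.1, mk coord c.2.1 [ffun => 0%N] set0 c.2.2) | c <- a].
    rewrite /vec_in all_map; apply/allP => c ca /=.
    have := allP Ha c ca; rewrite /path_ok => Hc.
    by apply: (pb_ok_mk Hdiag) => //; rewrite cards0.
  move=> y; rewrite /mu coef_lin big_map coefE; apply: eq_bigr => c _.
  by rewrite (mubasis_mk0 coord c.2.1 [ffun => 0%N] c.2.2) coef_single ez; case: c => [x [t m]].
-
  move=> v Hv; split.
    move=> Hz; have [w [v' [Hw Hv' E]]] := red_vec Hdiag Hinc Hv.
    exists w => //.
    suff Z : vzero v' by move=> b; rewrite E coef_cat Z addr0.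
    have Hmu : vzero (mu coord v').
      move=> y; have := Hz y.
      by rewrite /mu (lin_veq (mubasis coord) E y) lin_cat coef_cat (mud_zero Hdiag Hinc Hw) add0r.
    have HC : forall c, c \in v' -> exists t a, c.2 = mk coord t [ffun => 0%N] set0 a.
      move=> c cv; have [t [b [X [a [Ec Ht HX HUC]]]]] := Hv' c cv.
      have X0 : X = set0 by apply/eqP; rewrite -cards_eq0 HX.
      case: HUC => [[j [jX _]]|[_ Hb]]; first by rewrite X0 inE in jX.
      exists t, a; rewrite Ec X0; congr mk; by apply/ffunP => l; rewrite ffunE Hb.
    move=> y; case yv: (y \in map snd v'); last by apply: coef_notin; rewrite yv.
    have [c cv yE] := mapP yv.
    have [t [a Ec]] := HC c cv.
    have H := Hmu (t, a); rewrite /mu coef_lin in H.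
    rewrite yE coefE -[RHS]H.
    apply: eq_big_seq => c' c'v.
    have [t' [a' ->]] := HC c' c'v; rewrite Ec mubasis_mk0 coef_single ez mk_eq !eqxx /=.
    by rewrite xpair_eqE.
  move=> [w Hw E] y.
  by rewrite /mu -(lin_veq (mubasis coord) E y) (mud_zero Hdiag Hinc Hw).
-
  move=> d /andP [d1 dn] v Hv; split.
    move=> Hz; have [w [v' [Hw Hv' E]]] := red_vec Hdiag Hinc Hv.
    exists w => //.
    have HU : forall c, c \in v' -> Uok coord d c.2.
      move=> c cv; have [t [b [X [a [Ec Ht HX HUC]]]]] := Hv' c cv.
      exists t, b, X, a; split => //; case: HUC => // [[X0 _]].
      by move: d1; rewrite -HX X0 cards0.
    have Z' : vzero (dmap coord eps v').
      move=> y; have := Hz y.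
      by rewrite /dmap (lin_veq _ E y) lin_cat coef_cat (dd_zero Hdiag Hinc Hw) add0r.
    have Z := inj_U Hdiag Hinc HU Z'.
    by move=> b; rewrite E coef_cat Z addr0.
  move=> [w Hw E] y.
  by rewrite /dmap -(lin_veq _ E y) (dd_zero Hdiag Hinc Hw).
-
  move=> n0 v Hv Hz; apply: (@inj_U _ _ _ _ Hdiag _ Hinc n) => // c cv.
  have [t [b [X [a [Ec Ht HX]]]]] := pb_okE (allP Hv c cv).
  have XT : X = [set: 'I_n] by apply/eqP; rewrite eqEcard subsetT cardsT card_ord HX leqnn.
  exists t, b, X, a; split => //; exists (Ordinal n0); split; first by rewrite XT inE.
  by [].
-
  move=> d _ v Hv bb /coef_in /mem_lin [c cv].
  have [t [b [X [a [Ec Ht HX]]]]] := pb_okE (allP Hv c cv).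
  rewrite Ec => /mapP [c0 c0d ->].
  have [i [W [iX sW ->]]] := mem_dbasis c0d.
  rewrite /= /plen /=.
  change (0 < esum (eadd a (ind ([set i] :\: W))) + esum (eadd (ind W) b))%N.
  rewrite !esumD !esum_ind.
  move: sW; rewrite subset1 => /orP [/eqP ->|/eqP ->].
    by rewrite cards1; lia.
  by rewrite setD0 cards1; lia.
Qed.
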